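(* Let $x\in\mathbf{S}$, let $v\in V$ with $\mathsf{supp}(v)\ne\emptyset$, and let $e=\{v,w\}\in\mathsf{T}(v)$. (E1) If $e\in E_1$, then $x(E(w))=1$ and $\mathsf{B}(w)=\{e\}$. (E2) If $e\in E_2$, then $x(E(w))=1$, $e\in\mathsf{B}(w)$, and $x(E[\sim_v e])\ge x(E[\sim_w e])$.
   Context: Setting: $G=(V,E)$ is a finite simple bipartite graph with $V=V_1\sqcup V_2$, every edge joining a vertex of $V_1$ to a vertex of $V_2$; an edge is identified with the set of its two endpoints. $E$ is partitioned into $E_1,E_2$. For $F\subseteq E$ and $v\in V$, $F(v)$ is the set of edges of $F$ incident to $v$. For every $v\in V$ there is a transitive and complete binary relation $\succsim_v$ on $E(v)\cup\{\emptyset\}$ with $e\succsim_v\emptyset$ and $\emptyset\not\succsim_v e$ for all $e\in E(v)$; $\succ_v$ and $\sim_v$ are its strict and indifference parts. For $x\in\mathbb{R}^E$, $x(F)=\sum_{e\in F}x(e)$. $E[\succ_v e]=\{f\in E(v): f\succ_v e\}$, $E[\sim_v e]=\{f\in E(v): f\sim_v e\}$. $\mathbf{S}$ is the set of $x\in\mathbb{R}_+^E$ with (1) $x(E(v))\le1$ for all $v\in V$; (2) $x(e)+\sum_{v\in e}x(E[\succ_v e])\ge1$ for all $e\in E_1$; (3) $x(E[\sim_v e])+\sum_{w\in e}x(E[\succ_w e])\ge1$ for all $e\in E_2$, $v\in e$. For $x\in\mathbf{S}$: $\mathsf{supp}=\{e\in E: x(e)>0\}$; for $v$ with $\mathsf{supp}(v)\neq\emptyset$,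 $\mathsf{T}(v)$ (resp. $\mathsf{B}(v)$) is the set of $e\in\mathsf{supp}(v)$ with $e\succsim_v f$ (resp. $f\succsim_v e$) for all $f\in\mathsf{supp}(v)$. *)

(* Defs.v *)
From mathcomp Require Import all_boot all_order all_algebra.
Set Implicit Arguments. Unset Strict Implicit. Unset Printing Implicit Defensive.
Import Order.TTheory GRing.Theory Num.Theory.
Local Open Scope ring_scope.

(* Bipartite graph: vertex set V = V1 + V2; an edge is identified with the
   pair (a,b) of its endpoints a in V1, b in V2 (so the graph is simple).
   The edge set E is a finite subset of V1 * V2. *)
Definition vert (V1 V2 : finType) : finType := (V1 + V2)%type.
Definition edge (V1 V2 : finType) : finType := (V1 * V2)%type.

Definition incident (V1 V2 : finType) (v : vert V1 V2) (e : edge V1 V2) : bool :=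
  match v with inl a => a == e.1 | inr b => b == e.2 end.

Definition Einc (V1 V2 : finType) (E : {set edge V1 V2}) (v : vert V1 V2)
  : {set edge V1 V2} := [set e in E | incident v e].

(* Preferences: pref v a b  means  a >=_v b, on E(v) \cup {emptyset},
   where None encodes emptyset. *)
Definition pref_dom (V1 V2 : finType) (E : {set edge V1 V2}) (v : vert V1 V2)
  (a : option (edge V1 V2)) : bool :=
  match a with None => true | Some e => e \in Einc E v end.

Definition pref_ok (V1 V2 : finType) (E : {set edge V1 V2})
  (pref : vert V1 V2 -> option (edge V1 V2) -> option (edge V1 V2) -> bool) : Prop :=
  forall v,
    (forall a b c, pref_dom E v a -> pref_dom E v b -> pref_dom E v c ->
        pref v a b -> pref v b c -> pref v a c) /\
    (forall a b, pref_dom E v a -> pref_dom E v b -> pref v a b || pref v b a) /\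
    (forall e, e \in Einc E v -> pref v (Some e) None /\ ~~ pref v None (Some e)).

Definition wpref (V1 V2 : finType)
  (pref : vert V1 V2 -> option (edge V1 V2) -> option (edge V1 V2) -> bool)
  v (e f : edge V1 V2) : bool := pref v (Some e) (Some f).
Definition spref (V1 V2 : finType)
  (pref : vert V1 V2 -> option (edge V1 V2) -> option (edge V1 V2) -> bool)
  v (e f : edge V1 V2) : bool := wpref pref v e f && ~~ wpref pref v f e.
Definition indiff (V1 V2 : finType)
  (pref : vert V1 V2 -> option (edge V1 V2) -> option (edge V1 V2) -> bool)
  v (e f : edge V1 V2) : bool := wpref pref v e f && wpref pref v f e.

Definition Esucc (V1 V2 : finType) (E : {set edge V1 V2})
  (pref : vert V1 V2 -> option (edge V1 V2) -> option (edge V1 V2) -> bool)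
  v (e : edge V1 V2) : {set edge V1 V2} :=
  [set f in Einc E v | spref pref v f e].
Definition Esim (V1 V2 : finType) (E : {set edge V1 V2})
  (pref : vert V1 V2 -> option (edge V1 V2) -> option (edge V1 V2) -> bool)
  v (e : edge V1 V2) : {set edge V1 V2} :=
  [set f in Einc E v | indiff pref v f e].

Definition xs (V1 V2 : finType) (R : realFieldType) (x : edge V1 V2 -> R)
  (F : {set edge V1 V2}) : R := \sum_(e in F) x e.

(* membership in the polytope S (x is only relevant on E) *)
Definition inS (V1 V2 : finType) (E E1 E2 : {set edge V1 V2})
  (pref : vert V1 V2 -> option (edge V1 V2) -> option (edge V1 V2) -> bool)
  (R : realFieldType) (x : edge V1 V2 -> R) : Prop :=
  (forall e, e \in E -> 0 <= x e) /\
  (forall v, xs x (Einc E v) <= 1) /\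
  (forall e, e \in E1 ->
     1 <= x e + \sum_(v : vert V1 V2 | incident v e) xs x (Esucc E pref v e)) /\
  (forall e v, e \in E2 -> incident v e ->
     1 <= xs x (Esim E pref v e)
          + \sum_(w : vert V1 V2 | incident w e) xs x (Esucc E pref w e)).

Definition supp (V1 V2 : finType) (E : {set edge V1 V2}) (R : realFieldType)
  (x : edge V1 V2 -> R) : {set edge V1 V2} := [set e in E | 0 < x e].

Definition suppv (V1 V2 : finType) (E : {set edge V1 V2}) (R : realFieldType)
  (x : edge V1 V2 -> R) v : {set edge V1 V2} := supp E x :&: Einc E v.

Definition Top (V1 V2 : finType) (E : {set edge V1 V2})
  (pref : vert V1 V2 -> option (edge V1 V2) -> option (edge V1 V2) -> bool)
  (R : realFieldType) (x : edge V1 V2 -> R) v : {set edge V1 V2} :=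
  [set e in suppv E x v | [forall f in suppv E x v, wpref pref v e f]].

Definition Bot (V1 V2 : finType) (E : {set edge V1 V2})
  (pref : vert V1 V2 -> option (edge V1 V2) -> option (edge V1 V2) -> bool)
  (R : realFieldType) (x : edge V1 V2 -> R) v : {set edge V1 V2} :=
  [set e in suppv E x v | [forall f in suppv E x v, wpref pref v f e]].

(* Main.v *)
Require Import Defs.
From mathcomp Require Import all_boot all_order all_algebra.
From mathcomp Require Import lra.
Import Order.TTheory GRing.Theory Num.Theory.
Local Open Scope ring_scope.

Lemma key (R : realFieldType) (T : finType) (x : T -> R) (C A B : {set T}) :
  A \subset C -> B \subset C -> [disjoint A & B] ->
  (forall f, f \in C -> 0 <= x f) ->
  \sum_(f in C) x f <= 1 -> 1 <= \sum_(f in A) x f + \sum_(f in B) x f ->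
  [/\ \sum_(f in C) x f = 1, \sum_(f in A) x f + \sum_(f in B) x f = 1 &
   forall f, f \in C -> f \notin A -> f \notin B -> x f = 0].
Proof.
move=> sAC sBC dAB x0 le1 ge1.
have eqU : \sum_(f in A :|: B) x f = \sum_(f in A) x f + \sum_(f in B) x f.
  rewrite -bigU //; apply: eq_bigl => f; by rewrite !inE.
have spl : \sum_(f in C) x f = \sum_(f in C :&: (A :|: B)) x f + \sum_(f in C :\: (A :|: B)) x f by apply: big_setID.
have sUC : A :|: B \subset C by rewrite subUset sAC.
rewrite (setIidPr sUC) eqU in spl.
have r0 : 0 <= \sum_(f in C :\: (A :|: B)) x f.
  apply: sumr_ge0 => f; rewrite inE => /andP[_ Hf]; exact: x0.
have rz : \sum_(f in C :\: (A :|: B)) x f = 0 by lra.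
split; [lra | lra |] => f fC fA fB.
apply: (psumr_eq0P _ rz).
  move=> g; rewrite inE => /andP[_ Hg]; exact: x0.
by rewrite !inE fC (negPf fA) (negPf fB).
Qed.

Lemma inc3 (V1 V2 : finType) (u v w : vert V1 V2) e :
  incident u e -> incident v e -> incident w e -> v != w -> (u == v) || (u == w).
Proof.
by case: u v w => [a|a] [b|b] [c|c] /= => /eqP Ha /eqP Hb /eqP Hc; subst; rewrite ?eqxx.
Qed.

Lemma sum2 (V1 V2 : finType) (R : realFieldType) (F : vert V1 V2 -> R) v w e :
  incident v e -> incident w e -> v != w ->
  \sum_(u | incident u e) F u = F v + F w.
Proof.
move=> Hv Hw Hvw.
rewrite (bigD1 v) //= (bigD1 w) /=; last by rewrite Hw eq_sym Hvw.
rewrite big1 ?addr0 // => u /andP[/andP[Hu Huv] Huw].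
by have := @inc3 _ _ u v w e Hu Hv Hw Hvw; rewrite (negPf Huv) (negPf Huw).
Qed.

Lemma aux_ineq (R : realFieldType) (a b c : R) : 1 <= a + c -> b + c = 1 -> b <= a.
Proof. move=> h1 h2; lra. Qed.

Theorem lemma4p5 (V1 V2 : finType) (E E1 E2 : {set edge V1 V2})
  (pref : vert V1 V2 -> option (edge V1 V2) -> option (edge V1 V2) -> bool)
  (R : realFieldType) (x : edge V1 V2 -> R) :
  E1 :|: E2 = E -> [disjoint E1 & E2] ->
  pref_ok E pref ->
  inS E E1 E2 pref x ->
  forall (v w : vert V1 V2) (e : edge V1 V2),
    suppv E x v != set0 ->
    incident v e -> incident w e -> v != w ->
    e \in Top E pref x v ->
    (e \in E1 -> xs x (Einc E w) = 1 /\ Bot E pref x w = [set e]) /\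
    (e \in E2 -> [/\ xs x (Einc E w) = 1, e \in Bot E pref x w &
                     xs x (Esim E pref w e) <= xs x (Esim E pref v e)]).
Proof.
move=> HU Hdis Hok [Hx0 [Hle [H1 H2]]] v w e Hsupp Hv Hw Hvw Htop.
move: Htop; rewrite inE => /andP[Hes /forallP Hall].
move: Hes; rewrite /suppv /supp !inE => /andP[/andP[HeE Hxe] _].
have HeW : e \in Einc E w by rewrite inE HeE Hw.
have Hsv : xs x (Esucc E pref v e) = 0.
  rewrite /xs big1 // => f; rewrite inE => /andP[Hf /andP[_ Hn]].
  move: Hf; rewrite inE => /andP[HfE Hfv].
  have := Hx0 f HfE; rewrite le_eqVlt => /orP[/eqP<-//|Hpos].
  have := Hall f; rewrite /suppv /supp !inE HfE Hpos Hfv /= => Hw'.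
  by rewrite Hw' in Hn.
have Hrefl : wpref pref w e e.
  have [_ [Htot _]] := Hok w.
  by have := Htot (Some e) (Some e) HeW HeW; rewrite orbb.
have Hsum := @sum2 _ _ _ (fun u => xs x (Esucc E pref u e)) v w e Hv Hw Hvw.
have x0w : forall f, f \in Einc E w -> 0 <= x f.
  by move=> f; rewrite inE => /andP[fE _]; apply: Hx0.
have sSucc : Esucc E pref w e \subset Einc E w.
  by apply/subsetP => f; rewrite inE => /andP[].
have sSim : Esim E pref w e \subset Einc E w.
  by apply/subsetP => f; rewrite inE => /andP[].
split.
- move=> He1.
  have h1 := H1 e He1; rewrite Hsum Hsv add0r in h1.
  have d1 : [disjoint [set e] & Esucc E pref w e].
    rewrite disjoint_subset; apply/subsetP => f; rewrite !inE => /eqP ->.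
    by apply/negP => /andP[_]; rewrite /spref Hrefl.
  have s1 : [set e] \subset Einc E w by rewrite sub1set.
  have [K1 _ K3] := @key _ _ x _ _ _ s1 sSucc d1 x0w (Hle w) ltac:(by rewrite big_set1).
  split; first exact: K1.
  apply/setP => f; rewrite /Bot /suppv /supp !inE.
  apply/idP/idP.
  + move=> /andP[/andP[/andP[fE fx] /andP[_ fw]] /forallP Hf].
    apply/negPn/negP => Hne.
    have fW : f \in Einc E w by rewrite inE fE fw.
    have [fS|fS] := boolP (f \in Esucc E pref w e).
      move: fS; rewrite inE => /andP[_ /andP[_ Hn]].
      have := Hf e; rewrite !inE HeE Hxe Hw /= => Hwe.
      by rewrite Hwe in Hn.
    have := K3 f fW; rewrite inE Hne => /(_ isT fS) fz.
    by rewrite fz ltxx in fx.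
  + move=> /eqP ->; rewrite HeE Hxe Hw /=.
    apply/forallP => g; apply/implyP; rewrite !inE => /andP[/andP[gE gx] /andP[_ gw]].
    have gW : g \in Einc E w by rewrite inE gE gw.
    have [->|Hne] := eqVneq g e; first exact: Hrefl.
    have [gS|gS] := boolP (g \in Esucc E pref w e).
      by move: gS; rewrite inE => /andP[_ /andP[]].
    have := K3 g gW; rewrite inE Hne => /(_ isT gS) gz.
    by rewrite gz ltxx in gx.
- move=> He2.
  have hv := H2 e v He2 Hv; rewrite Hsum Hsv add0r in hv.
  have hw := H2 e w He2 Hw; rewrite Hsum Hsv add0r in hw.
  have d1 : [disjoint Esim E pref w e & Esucc E pref w e].
    rewrite disjoint_subset; apply/subsetP => f; rewrite !inE => /andP[_ /andP[_ a]].
    by apply/negP => /andP[_ /andP[_ b]]; rewrite a in b.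
  have [K1 K2 K3] := @key _ _ x _ _ _ sSim sSucc d1 x0w (Hle w) hw.
  split; first exact: K1; last exact: (@aux_ineq R _ _ _ hv K2).
  rewrite HeE Hxe Hw /=.
  apply/forallP => g; apply/implyP; rewrite /suppv /supp !inE => /andP[/andP[gE gx] /andP[_ gw]].
  have gW : g \in Einc E w by rewrite inE gE gw.
  have [gS|gS] := boolP (g \in Esucc E pref w e).
    by move: gS; rewrite inE => /andP[_ /andP[]].
  have [gI|gI] := boolP (g \in Esim E pref w e).
    by move: gI; rewrite inE => /andP[_ /andP[]].
  have gz := K3 g gW gI gS.
  by rewrite gz ltxx in gx.
Qed.
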